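(* Let $\sigma$ be a sequence of transitions such that $G_\sigma$ has no negative cycle, let $H=|G_\sigma|$, and let $k\ge 1$. If there is a complete p-tree with root labelled $(x,y)$, weight $w$ and height at most $k$, then in the $2k$-fold composition $H^{\odot 2k}=H\odot\cdots\odot H$ (whose columns are $0,\dots,4k-1$, the $l$-th copy of $H$ occupying columns $2l-2$ and $2l-1$) there is a path from $(2k-1,x)$ to $(2k-1,y)$ of weight at most $w$; hence the minimal weight of such a path is at most $w$.
   Context: Fix a finite set of clocks $X=\{x_0,\dots,x_m\}$ and a finite sequence $\sigma$ of timed-automaton transitions over $X$. A weight is a pair $(\preccurlyeq,d)$ with $\preccurlyeq\in\{<,\le\}$, $d\in\mathbb{Z}$; weights are added by $(\preccurlyeq_1,d_1)+(\preccurlyeq_2,d_2)=(\preccurlyeq,d_1+d_2)$, $\preccurlyeq$ being $<$ iff one of $\preccurlyeq_1,\preccurlyeq_2$ is $<$, and totally ordered by $(\preccurlyeq,d)<(\preccurlyeq',d')$ iff $d<d'$, or $d=d'$, $\preccurlyeq$ is $<$ and $\preccurlyeq'$ is $\le$. A weight is negative if it is smaller than $(\le,0)$; the weight of a path is the sum of its edge weights. A transformation graph with $k+1$ columns is a directed graph with vertex set $\{0,\dots,k\}\times X$ with weighted edges. $G_\sigma$ is the transformation graph of $\sigma$ (the composition of the one-transition graphs encoding time elapse, guard and reset of each transition). Composition: if $G_1$ has $k_1$ columns and $G_2$ has $k_2$ columns, $G_1\odot G_2$ has vertex set $\{0,\dots,k_1+k_2-1\}\times X$, the edges of $G_1$,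 the edges of $G_2$ shifted by $k_1$ columns, and for every $x\in X$ edges $(k_1-1,x)\to(k_1,x)$ and $(k_1,x)\to(k_1-1,x)$ of weight $(\le,0)$. The canonical form of a graph $G$ without negative cycles has, for every pair of distinct vertices $u,w$ connected by a path, an edge $u\to w$ weighted by the minimal path weight. $|G|$ is the canonical form of $G$ restricted to its first and last columns, renumbered $0$ and $1$. p-trees (relative to $H=|G_\sigma|$): a p-tree is a finite rooted tree with weighted edges whose nodes are labelled by $\top$ or by pairs $(x,y)\in X\times X$; nodes labelled $\top$ are leaves. A node labelled $(x,y)$ has children of exactly one of the following forms: (a) a single child $\top$, with edge weight $e$, where $H$ has an edge $(c,x)\to(c,y)$ of weight $e$ for some $c\in\{0,1\}$; (b) a single child $(u,v)$, with edge weight $e_1+e_2$, where for some $c,c'\in\{0,1\}$ with $c\ne c'$, $H$ has edges $(c,x)\to(c',u)$ of weight $e_1$ and $(c',v)\to(c,y)$ of weight $e_2$; (c) two children $(x,z)$ and $(z,y)$ for some $z\in X$, both with edge weight $(\le,0)$. The weight of a p-tree is the sum of all its edge weights. A p-tree is complete if all its leaves are labelled $\top$. The height of a tree is the maximal number of edges on a path from the root to a leaf. *)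

(* Defs.v *)
From Stdlib Require Import ZArith.
From mathcomp Require Import all_boot.
Set Implicit Arguments. Unset Strict Implicit. Unset Printing Implicit Defensive.

(* ---------- Weights (≼, d) ; wstrict = true means "<", false means "≤" ---------- *)
Record weight := W { wstrict : bool; wval : Z }.

Definition w0 : weight := W false 0%Z.

Definition addw (a b : weight) : weight :=
  W (wstrict a || wstrict b) (wval a + wval b)%Z.

Definition lew (a b : weight) : Prop :=
  (wval a < wval b)%Z \/ (wval a = wval b /\ (wstrict a = true \/ wstrict b = false)).

Definition ltw (a b : weight) : Prop := ~ lew b a.

Definition negw (a : weight) : Prop := ltw a w0.

(* Vertices are pairs (column, clock); a graph with [ncols] columns only has
   edges between vertices of columns 0 .. ncols-1 (see [edges]). *)
Section Graphs.
Variable X : finType.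

Definition vertex := (nat * X)%type.

Record tgraph := TGraph {
  ncols : nat;
  tedge : vertex -> vertex -> weight -> Prop }.

Definition edges (G : tgraph) (u v : vertex) (e : weight) : Prop :=
  (u.1 < ncols G)%N /\ (v.1 < ncols G)%N /\ tedge G u v e.

Inductive gpath (G : tgraph) : vertex -> vertex -> weight -> Prop :=
| gp_nil u : gpath G u u w0
| gp_cons u v w e p : edges G u v e -> gpath G v w p -> gpath G u w (addw e p).

(* a cycle = a nonempty path from a vertex to itself *)
Definition no_neg_cycle (G : tgraph) : Prop :=
  forall u v e p, edges G u v e -> gpath G v u p -> ~ negw (addw e p).

Definition minpath (G : tgraph) (u v : vertex) (m : weight) : Prop :=
  gpath G u v m /\ forall p, gpath G u v p -> lew m p.

Definition tcomp (G1 G2 : tgraph) : tgraph :=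
  TGraph (ncols G1 + ncols G2)
    (fun u v e =>
       edges G1 u v e
       \/ (exists u' v', u = (u'.1 + ncols G1, u'.2) /\ v = (v'.1 + ncols G1, v'.2)
                         /\ edges G2 u' v' e)
       \/ (u.2 = v.2 /\ e = w0 /\
           ((u.1 = (ncols G1).-1 /\ v.1 = ncols G1) \/
            (u.1 = ncols G1 /\ v.1 = (ncols G1).-1)))).

Fixpoint tpow (H : tgraph) (m : nat) : tgraph :=
  match m with
  | 0 => TGraph 0 (fun _ _ _ => False)
  | S m' => match m' with
            | 0 => H
            | _ => tcomp (tpow H m') H
            end
  end.

(* |G| : canonical form of G restricted to first and last columns, renumbered 0,1.
   Column c ∈ {0,1} of |G| corresponds to column 0 (c = 0) or ncols G - 1 (c = 1) of G;
   canonical edges only join distinct vertices and carry the minimal path weight. *)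
Definition colof (G : tgraph) (c : nat) : nat := if c == 0 then 0 else (ncols G).-1.

Definition absG (G : tgraph) : tgraph :=
  TGraph 2 (fun u v e =>
    (colof G u.1, u.2) <> (colof G v.1, v.2) /\
    minpath G (colof G u.1, u.2) (colof G v.1, v.2) e).

(* PTop : leaf labelled ⊤;  PLeaf x y : node labelled (x,y) without children;
   PNode1 x y e t : node (x,y) with a single child t, edge weight e;
   PNode2 x y e1 t1 e2 t2 : node (x,y) with two children. *)
Inductive ptree :=
| PTop
| PLeaf (x y : X)
| PNode1 (x y : X) (e : weight) (t : ptree)
| PNode2 (x y : X) (e1 : weight) (t1 : ptree) (e2 : weight) (t2 : ptree).

Definition ptlabel (t : ptree) : option (X * X) :=
  match t with
  | PTop => None
  | PLeaf x y | PNode1 x y _ _ | PNode2 x y _ _ _ _ => Some (x, y)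
  end.

Fixpoint is_ptree (H : tgraph) (t : ptree) : Prop :=
  match t with
  | PTop => True
  | PLeaf _ _ => True
  | PNode1 x y e t' =>
      is_ptree H t' /\
      ((t' = PTop /\ exists c, (c <= 1)%N /\ edges H (c, x) (c, y) e)
       \/ (exists u v c c' e1 e2, ptlabel t' = Some (u, v) /\ (c <= 1)%N /\ (c' <= 1)%N
             /\ c <> c' /\ edges H (c, x) (c', u) e1 /\ edges H (c', v) (c, y) e2
             /\ e = addw e1 e2))
  | PNode2 x y e1 t1 e2 t2 =>
      is_ptree H t1 /\ is_ptree H t2 /\ e1 = w0 /\ e2 = w0 /\
      exists z, ptlabel t1 = Some (x, z) /\ ptlabel t2 = Some (z, y)
  end.

Fixpoint ptweight (t : ptree) : weight :=
  match t with
  | PTop | PLeaf _ _ => w0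
  | PNode1 _ _ e t' => addw e (ptweight t')
  | PNode2 _ _ e1 t1 e2 t2 => addw (addw e1 (ptweight t1)) (addw e2 (ptweight t2))
  end.

Fixpoint ptheight (t : ptree) : nat :=
  match t with
  | PTop | PLeaf _ _ => 0
  | PNode1 _ _ _ t' => (ptheight t').+1
  | PNode2 _ _ _ t1 _ t2 => (maxn (ptheight t1) (ptheight t2)).+1
  end.

Fixpoint complete (t : ptree) : Prop :=
  match t with
  | PTop => True
  | PLeaf _ _ => False
  | PNode1 _ _ _ t' => complete t'
  | PNode2 _ _ _ t1 _ t2 => complete t1 /\ complete t2
  end.

End Graphs.

(* Main.v *)
Require Import Defs.
From Stdlib Require Import ZArith Lia.
From mathcomp Require Import all_boot zify.

Section Aux.
Variable X : finType.

Lemma tpowSS (H : tgraph X) n : tpow H n.+2 = tcomp (tpow H n.+1) H.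
Proof. by []. Qed.

Lemma ncols_tpow (H : tgraph X) n : ncols H = 2 -> ncols (tpow H n.+1) = 2 * n.+1.
Proof.
move=> HH; elim: n => [|n IH]; first by rewrite /= HH.
rewrite tpowSS /= IH HH; lia.
Qed.

Lemma edge_tpow (H : tgraph X) n l a b i j x y e :
  ncols H = 2 -> (l < n.+1)%N -> i = 2 * l + a -> j = 2 * l + b ->
  edges H (a, x) (b, y) e -> edges (tpow H n.+1) (i, x) (j, y) e.
Proof.
move=> HH; elim: n l i j => [|n IH] l i j Hl -> ->.
  have -> : (2 * l + a = a)%N by lia.
  by have -> : (2 * l + b = b)%N by lia.
move=> E; have E' := E; case: E' => Ha [Hb _]; simpl in Ha, Hb.
rewrite tpowSS /edges /= ncols_tpow // HH.
split; first lia. split; first lia.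
case: (ltnP l n.+1) => Hln.
  left; have := IH l _ _ Hln erefl erefl E.
  by rewrite /edges.
right; left; exists (a, x), (b, y); rewrite /=.
split; first (f_equal; lia). split; first (f_equal; lia). exact E.
Qed.

Lemma glue_tpow (H : tgraph X) n l i j x :
  ncols H = 2 -> (l < n)%N -> i = 2 * l + 1 -> j = 2 * l + 2 ->
  edges (tpow H n.+1) (i, x) (j, x) w0 /\ edges (tpow H n.+1) (j, x) (i, x) w0.
Proof.
move=> HH; elim: n l i j => [|n IH] l i j Hl -> ->; first lia.
rewrite tpowSS /edges /= ncols_tpow // HH.
case: (ltnP l n) => Hln.
  have [[A1 [B1 C1]] [A2 [B2 C2]]] := IH l _ _ Hln erefl erefl.
  split; (split; first lia); (split; first lia); by left.
have El : l = n by lia.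
split; (split; first lia); (split; first lia); right; right;
  (split; first done); (split; first done).
- left; split; lia.
- right; split; lia.
Qed.

Lemma gpath_weq (G : tgraph X) u v p q : gpath G u v p -> p = q -> gpath G u v q.
Proof. by move=> ? <-. Qed.

Lemma addw0l p : addw w0 p = p.
Proof. by case: p. Qed.

Lemma addwA p q r : addw p (addw q r) = addw (addw p q) r.
Proof. case: p q r => [a x] [b y] [c z]; rewrite /addw /=; f_equal; [by case: a; case: b | lia]. Qed.

Lemma gpath_cat (G : tgraph X) u v w p q :
  gpath G u v p -> gpath G v w q -> gpath G u w (addw p q).
Proof.
elim=> [u0|u0 v0 w1 e p0 E _ IH] Hq; first by rewrite addw0l.
rewrite -addwA; apply: gp_cons E _; exact: IH.
Qed.

Ltac weq := rewrite /addw /w0 /=; f_equal;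
  first [ lia | repeat match goal with |- context [wstrict ?a] => destruct (wstrict a) end;
    reflexivity ].

Lemma ptpath (H : tgraph X) (HH : ncols H = 2) t :
  is_ptree H t -> complete t -> forall x y, ptlabel t = Some (x, y) ->
  forall n l, (ptheight t <= l.+1)%N -> (l + ptheight t <= n)%N ->
  gpath (tpow H n.+1) (2 * l + 1, x) (2 * l + 1, y) (ptweight t).
Proof.
elim: t => [|x0 y0|x0 y0 e t IH|x0 y0 e1 t1 IH1 e2 t2 IH2] //=.
- move=> [Ht [[-> [c [Hc He]]] | [u [v [c [c' [e1' [e2' [Hl [Hc [Hc' [Hneq [E1 [E2 ->]]]]]]]]]]]]]]
    Hcomp x y [<- <-] n l Hh1 Hh2.
  + case: c Hc He => [|[|c]] Hc He; last lia.
    * have [G1 G2] := glue_tpow H n (l) (2*l+1) (2*l+2) x0 HH ltac:(lia) erefl erefl.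
      have [G3 G4] := glue_tpow H n (l) (2*l+1) (2*l+2) y0 HH ltac:(lia) erefl erefl.
      eapply gpath_weq.
      eapply gp_cons; first exact G1.
      eapply gp_cons.
        apply: (edge_tpow H n (l.+1) 0 0 (2*l+2) (2*l+2) _ _ _ HH _ _ _ He); lia.
      eapply gp_cons; first exact G4.
      exact: gp_nil.
      weq.
    * eapply gpath_weq.
      eapply gp_cons.
        apply: (edge_tpow H n (l) 1 1 (2*l+1) (2*l+1) _ _ _ HH _ _ _ He); lia.
      exact: gp_nil.
      weq.
  + case: t IH Ht Hcomp Hl Hh1 Hh2 => [|u1 v1|u1 v1 e' t'|u1 v1 f1 s1 f2 s2] IH Ht Hcomp Hl Hh1 Hh2;
      try discriminate; try (simpl in Hcomp; contradiction);
      case: Hl => Eu Ev; subst u v; simpl in Hh1, Hh2.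
    * case: c c' Hc Hc' Hneq E1 E2 => [|[|c]] [|[|c']] Hc Hc' Hneq E1 E2; try lia.
      -- have [G1 G2] := glue_tpow H n (l) (2*l+1) (2*l+2) x0 HH ltac:(lia) erefl erefl.
         have [G3 G4] := glue_tpow H n (l) (2*l+1) (2*l+2) y0 HH ltac:(lia) erefl erefl.
         have P := IH Ht Hcomp u1 v1 erefl n l.+1 ltac:(simpl; lia) ltac:(simpl; lia).
         eapply gpath_weq.
         eapply gp_cons; first exact G1.
         eapply gp_cons.
           apply: (edge_tpow H n (l.+1) 0 1 (2*l+2) (2*l.+1+1) _ _ _ HH _ _ _ E1); lia.
         eapply gpath_cat; first exact P.
         eapply gp_cons.
           apply: (edge_tpow H n (l.+1) 1 0 (2*l.+1+1) (2*l+2) _ _ _ HH _ _ _ E2); lia.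
         eapply gp_cons; first exact G4.
         exact: gp_nil.
         weq.
      -- have [G1 G2] := glue_tpow H n (l.-1) (2*l.-1+1) (2*l) u1 HH ltac:(lia) erefl ltac:(lia).
         have [G3 G4] := glue_tpow H n (l.-1) (2*l.-1+1) (2*l) v1 HH ltac:(lia) erefl ltac:(lia).
         have P := IH Ht Hcomp u1 v1 erefl n l.-1 ltac:(simpl; lia) ltac:(simpl; lia).
         eapply gpath_weq.
         eapply gp_cons.
           apply: (edge_tpow H n (l) 1 0 (2*l+1) (2*l) _ _ _ HH _ _ _ E1); lia.
         eapply gp_cons; first exact G2.
         eapply gpath_cat; first exact P.
         eapply gp_cons; first exact G3.
         eapply gp_cons.
           apply: (edge_tpow H n (l) 0 1 (2*l) (2*l+1) _ _ _ HH _ _ _ E2); lia.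
         exact: gp_nil.
         weq.
    * case: c c' Hc Hc' Hneq E1 E2 => [|[|c]] [|[|c']] Hc Hc' Hneq E1 E2; try lia.
      -- have [G1 G2] := glue_tpow H n (l) (2*l+1) (2*l+2) x0 HH ltac:(lia) erefl erefl.
         have [G3 G4] := glue_tpow H n (l) (2*l+1) (2*l+2) y0 HH ltac:(lia) erefl erefl.
         have P := IH Ht Hcomp u1 v1 erefl n l.+1 ltac:(simpl; lia) ltac:(simpl; lia).
         eapply gpath_weq.
         eapply gp_cons; first exact G1.
         eapply gp_cons.
           apply: (edge_tpow H n (l.+1) 0 1 (2*l+2) (2*l.+1+1) _ _ _ HH _ _ _ E1); lia.
         eapply gpath_cat; first exact P.
         eapply gp_cons.
           apply: (edge_tpow H n (l.+1) 1 0 (2*l.+1+1) (2*l+2) _ _ _ HH _ _ _ E2); lia.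
         eapply gp_cons; first exact G4.
         exact: gp_nil.
         weq.
      -- have [G1 G2] := glue_tpow H n (l.-1) (2*l.-1+1) (2*l) u1 HH ltac:(lia) erefl ltac:(lia).
         have [G3 G4] := glue_tpow H n (l.-1) (2*l.-1+1) (2*l) v1 HH ltac:(lia) erefl ltac:(lia).
         have P := IH Ht Hcomp u1 v1 erefl n l.-1 ltac:(simpl; lia) ltac:(simpl; lia).
         eapply gpath_weq.
         eapply gp_cons.
           apply: (edge_tpow H n (l) 1 0 (2*l+1) (2*l) _ _ _ HH _ _ _ E1); lia.
         eapply gp_cons; first exact G2.
         eapply gpath_cat; first exact P.
         eapply gp_cons; first exact G3.
         eapply gp_cons.
           apply: (edge_tpow H n (l) 0 1 (2*l) (2*l+1) _ _ _ HH _ _ _ E2); lia.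
         exact: gp_nil.
         weq.
- move=> [H1 [H2 [-> [-> [z [L1 L2]]]]]] [C1 C2] x y [<- <-] n l Hh1 Hh2.
  have P1 := IH1 H1 C1 x0 z L1 n l ltac:(lia) ltac:(lia).
  have P2 := IH2 H2 C2 z y0 L2 n l ltac:(lia) ltac:(lia).
  eapply gpath_weq; first exact: gpath_cat P1 P2.
  weq.
Qed.

End Aux.

Theorem mainTheorem14 (X : finType) (G : tgraph X) (k : nat) (x y : X)
    (t : ptree X) (w : weight) :
  (0 < ncols G)%N ->
  no_neg_cycle G ->
  (1 <= k)%N ->
  is_ptree (absG G) t -> complete t ->
  ptlabel t = Some (x, y) -> ptweight t = w -> (ptheight t <= k)%N ->
  (exists p, gpath (tpow (absG G) (2 * k)) ((2 * k).-1, x) ((2 * k).-1, y) p /\ lew p w)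
  /\ (forall m, minpath (tpow (absG G) (2 * k)) ((2 * k).-1, x) ((2 * k).-1, y) m -> lew m w).
Proof.
move=> _ _ Hk Ht Hc Hl Hw Hh.
case: k Hk Hh => [|k] // _ Hh.
have E1 : (2 * k.+1 = (2 * k + 1).+1)%N by lia.
have E2 : ((2 * k.+1).-1 = 2 * k + 1)%N by lia.
rewrite E2 E1.
have P := @ptpath X (absG G) erefl t Ht Hc x y Hl (2 * k + 1) k ltac:(lia) ltac:(lia).
rewrite Hw in P.
have Lr : lew w w by right; split => //; case: (wstrict w); [left|right].
split; first by exists w.
by move=> m [_ Hm]; apply: Hm.
Qed.
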